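(* Fix integers $K,M\ge1$, $L\ge2$, $N_r\ge1$, and constants $T_{s,k}>0$, $E_{p,k}\ge0$, $E_k>0$, $T_c>0$, $X_k(m)>0$, $\mu_{\ell,m}\in\mathbb{R}$, $\sigma_m^2>0$, $\sigma_{s,k}^2\ge0$, $\sigma_r^2\ge0$, $N_0>0$, and $\mathbf h_{k,m}\in\mathbb{C}^{N_r}$. Consider the problem $\mathcal P_4$: maximize $\alpha$ over variables $\alpha\in\mathbb R$, $P_{s,k}>0$, $c_{k,m}\in\mathbb R$ ($c_{k,m}\ge 0$), $\mathbf f_m\in\mathbb C^{N_r}$ (viewed as a vector of real and imaginary parts), $u_{k,m}>0$, $v_{\ell,\ell',m}>0$, subject to $$P_{s,k}T_{s,k}+E_{p,k}+T_c\sum_{m=1}^M u_{k,m}X_k(m)-E_k\le0\quad(1\le k\le K),$$ $$\alpha-\sum_{m=1}^M v_{\ell,\ell',m}\le0\quad(1\le\ell\ne\ell'\le L),$$ $$\frac{c_{k,m}^2}{u_{k,m}}-R_{k,m}(\mathbf f_m)\le0\quad(\forall k,m),$$ $$Z_m(\{P_{s,k}\},\{c_{k,m}\},\mathbf f_m)-Q_{\ell,\ell',m}(\{c_{k,m}\},v_{\ell,\ell',m})\le0\quad(\forall \ell\ne\ell',m),$$ where $R_{k,m}(\mathbf f_m)=\mathbf h_{k,m}^H\mathbf f_m\mathbf f_m^H\mathbf h_{k,m}$, $$Z_m=\sigma_m^2\Big(\sum_{k=1}^K c_{k,m}\Big)^2+\sum_{k=1}^K c_{k,m}^2\Big(\sigma_{s,k}^2+\frac{\sigma_r^2}{P_{s,k}}\Big)+N_0\mathbf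 f_m^H\mathbf f_m,\qquad Q_{\ell,\ell',m}=\frac{(\mu_{\ell,m}-\mu_{\ell',m})^2}{v_{\ell,\ell',m}}\Big(\sum_{k=1}^K c_{k,m}\Big)^2.$$ Then $\mathcal P_4$ is a d.c. problem.
   Context: A d.c. (difference-of-convex) problem is an optimization problem whose objective function and all constraint functions can each be written as the difference of two convex functions on the (convex) domain of the variables. Here the domain is $P_{s,k}>0$, $u_{k,m}>0$, $v_{\ell,\ell',m}>0$, $c_{k,m}$ real, and $\mathbf f_m\in\mathbb C^{N_r}\cong\mathbb R^{2N_r}$. *)

(* Defs.v *)
(* Optimisation variables of problem P4, over an arbitrary
   real field R (the statement is purely algebraic). *)
From mathcomp Require Import all_boot all_order all_algebra.
Set Implicit Arguments. Unset Strict Implicit. Unset Printing Implicit Defensive.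
Import Order.TTheory GRing.Theory Num.Theory.
Local Open Scope ring_scope.

(* A point of the variable space of P4:
   alpha, P_{s,k}, c_{k,m}, f_m = fre_m + i fim_m (real and imaginary parts),
   u_{k,m}, v_{l,l',m}. *)
Record var (R : realFieldType) (K M L N : nat) := Var {
  va  : R;
  vP  : 'I_K -> R;
  vc  : 'I_K -> 'I_M -> R;
  vfr : 'I_M -> 'I_N -> R;
  vfi : 'I_M -> 'I_N -> R;
  vu  : 'I_K -> 'I_M -> R;
  vv  : 'I_L -> 'I_L -> 'I_M -> R }.

Section DC.
Variables (R : realFieldType) (K M L N : nat).
Notation V := (var R K M L N).

Definition comb (t : R) (x y : V) : V :=
  Var (t * va x + (1 - t) * va y)
      (fun k => t * vP x k + (1 - t) * vP y k)
      (fun k m => t * vc x k m + (1 - t) * vc y k m)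
      (fun m i => t * vfr x m i + (1 - t) * vfr y m i)
      (fun m i => t * vfi x m i + (1 - t) * vfi y m i)
      (fun k m => t * vu x k m + (1 - t) * vu y k m)
      (fun l l' m => t * vv x l l' m + (1 - t) * vv y l l' m).

Definition in_dom (x : V) : Prop :=
  [/\ forall k, 0 < vP x k,
      forall k m, 0 < vu x k m
    & forall l l' m, 0 < vv x l l' m].

Definition convex_on_dom (g : V -> R) : Prop :=
  forall (x y : V) (t : R), in_dom x -> in_dom y -> 0 <= t -> t <= 1 ->
    g (comb t x y) <= t * g x + (1 - t) * g y.

Definition is_dc (g : V -> R) : Prop :=
  exists g1 g2 : V -> R, [/\ convex_on_dom g1, convex_on_dom g2
    & forall x, in_dom x -> g x = g1 x - g2 x].

(* channel h_{k,m} = hr + i hi in C^N *)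
Variables (hr hi : 'I_K -> 'I_M -> 'I_N -> R).

(* R_{k,m}(f_m) = h^H f f^H h = |h^H f|^2 ;
   h^H f = sum_i conj(h_i) f_i = sum (hr fr + hi fi) + i sum (hr fi - hi fr) *)
Definition Rkm (k : 'I_K) (m : 'I_M) (x : V) : R :=
  (\sum_i (hr k m i * vfr x m i + hi k m i * vfi x m i)) ^+ 2 +
  (\sum_i (hr k m i * vfi x m i - hi k m i * vfr x m i)) ^+ 2.

Variables (sigma2 : 'I_M -> R) (sigs2 : 'I_K -> R) (sigr2 N0 : R)
          (mu : 'I_L -> 'I_M -> R).

Definition Zm (m : 'I_M) (x : V) : R :=
  sigma2 m * (\sum_k vc x k m) ^+ 2
  + \sum_k vc x k m ^+ 2 * (sigs2 k + sigr2 / vP x k)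
  + N0 * \sum_i (vfr x m i ^+ 2 + vfi x m i ^+ 2).

Definition Qllm (l l' : 'I_L) (m : 'I_M) (x : V) : R :=
  (mu l m - mu l' m) ^+ 2 / vv x l l' m * (\sum_k vc x k m) ^+ 2.

End DC.

(* Main.v *)
Require Import Defs.
From mathcomp Require Import all_boot all_order all_algebra.
Import Order.TTheory GRing.Theory Num.Theory.
From mathcomp Require Import ring lra.
Local Open Scope ring_scope.

Set Implicit Arguments.
Section Helpers.
Variables (R : realFieldType) (K M L N : nat).
Notation V := (var R K M L N).

Definition lin (g : V -> R) := forall x y t, g (comb t x y) = t * g x + (1 - t) * g y.

Lemma lin_const c : lin (fun _ => c).
Proof. move=> x y t; ring. Qed.
Lemma lin_add (f g : V -> R) : lin f -> lin g -> lin (fun x => f x + g x).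
Proof. move=> hf hg x y t; rewrite hf hg; ring. Qed.
Lemma lin_sub (f g : V -> R) : lin f -> lin g -> lin (fun x => f x - g x).
Proof. move=> hf hg x y t; rewrite hf hg; ring. Qed.
Lemma lin_scale c (f : V -> R) : lin f -> lin (fun x => c * f x).
Proof. move=> hf x y t; rewrite hf; ring. Qed.
Lemma lin_scaler c (f : V -> R) : lin f -> lin (fun x => f x * c).
Proof. move=> hf x y t; rewrite hf; ring. Qed.
Lemma lin_sum (I : finType) (F : I -> V -> R) :
  (forall i, lin (F i)) -> lin (fun x => \sum_i F i x).
Proof.
move=> h x y t; rewrite !mulr_sumr -big_split /=; apply: eq_bigr => i _; exact: h.
Qed.

Lemma lin_conv (g : V -> R) : lin g -> convex_on_dom g.
Proof. by move=> h x y t _ _ _ _; rewrite h. Qed.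

Lemma conv_eq {f g : V -> R} : (forall x, f x = g x) -> convex_on_dom g -> convex_on_dom f.
Proof. by move=> e h x y t hx hy h0 h1; rewrite !e; apply: h. Qed.

Lemma conv_add (f g : V -> R) : convex_on_dom f -> convex_on_dom g ->
  convex_on_dom (fun x => f x + g x).
Proof.
move=> hf hg x y t hx hy h0 h1.
have := hf x y t hx hy h0 h1; have := hg x y t hx hy h0 h1. lra.
Qed.

Lemma conv_scale c (f : V -> R) : 0 <= c -> convex_on_dom f -> convex_on_dom (fun x => c * f x).
Proof.
move=> hc hf x y t hx hy h0 h1.
have := ler_wpM2l hc (hf x y t hx hy h0 h1) => H.
apply: (le_trans H).
have -> : c * (t * f x + (1 - t) * f y) = t * (c * f x) + (1 - t) * (c * f y) by ring.
by [].
Qed.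

Lemma conv_sum (I : finType) (F : I -> V -> R) :
  (forall i, convex_on_dom (F i)) -> convex_on_dom (fun x => \sum_i F i x).
Proof.
move=> h x y t hx hy h0 h1; rewrite !mulr_sumr -big_split /=.
apply: ler_sum => i _; exact: h.
Qed.

Lemma conv_sq (f : V -> R) : lin f -> convex_on_dom (fun x => f x ^+ 2).
Proof.
move=> hf x y t _ _ h0 h1; rewrite hf.
rewrite -subr_ge0.
have -> : t * f x ^+ 2 + (1 - t) * f y ^+ 2 - (t * f x + (1 - t) * f y) ^+ 2
  = (t * (1 - t)) * (f x - f y) ^+ 2 by ring.
apply: mulr_ge0; last exact: sqr_ge0.
apply: mulr_ge0 => //; lra.
Qed.

Lemma qol (t a b p q : R) : 0 <= t -> t <= 1 -> 0 < p -> 0 < q ->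
  (t * a + (1 - t) * b) ^+ 2 / (t * p + (1 - t) * q)
  <= t * (a ^+ 2 / p) + (1 - t) * (b ^+ 2 / q).
Proof.
move=> h0 h1 hp hq.
have hD : 0 < t * p + (1 - t) * q.
  move: h0; rewrite le_eqVlt => /predU1P [<- | ht].
    by rewrite mul0r add0r subr0 mul1r.
  have h3 : 0 < t * p by exact: mulr_gt0.
  have h4 : 0 <= (1 - t) * q by apply: mulr_ge0; [lra | exact: ltW].
  lra.
rewrite ler_pdivrMr // -subr_ge0.
have hp0 : p != 0 by rewrite gt_eqF.
have hq0 : q != 0 by rewrite gt_eqF.
have -> : (t * (a ^+ 2 / p) + (1 - t) * (b ^+ 2 / q)) * (t * p + (1 - t) * q)
   - (t * a + (1 - t) * b) ^+ 2 = t * (1 - t) * (a * q - b * p) ^+ 2 / (p * q).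
  by field; rewrite ?mulf_neq0 ?hp0 ?hq0.
apply: divr_ge0; last by apply: mulr_ge0; exact: ltW.
apply: mulr_ge0; last exact: sqr_ge0.
apply: mulr_ge0 => //; lra.
Qed.

Lemma conv_qol (a p : V -> R) : lin a -> lin p -> (forall x, in_dom x -> 0 < p x) ->
  convex_on_dom (fun x => a x ^+ 2 / p x).
Proof.
move=> ha hp pos x y t hx hy h0 h1; rewrite ha hp.
by apply: qol => //; apply: pos.
Qed.

Lemma dc_of {g g1 g2 : V -> R} : convex_on_dom g1 -> convex_on_dom g2 ->
  (forall x, g x = g1 x - g2 x) -> is_dc g.
Proof. by move=> h1 h2 e; exists g1, g2; split => // x _. Qed.

Lemma dc_lin (g : V -> R) : lin g -> is_dc g.
Proof.
move=> h; apply: (dc_of (g1 := g) (g2 := fun _ => 0)).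
- exact: lin_conv.
- exact/lin_conv/lin_const.
- by move=> x; rewrite subr0.
Qed.

End Helpers.
Unset Implicit Arguments.

Theorem lemma3 (R : realFieldType) (K M L N : nat)
  (hK : (1 <= K)%N) (hM : (1 <= M)%N) (hL : (2 <= L)%N) (hN : (1 <= N)%N)
  (Ts Ep : 'I_K -> R) (E : 'I_K -> R) (Tc : R) (X : 'I_K -> 'I_M -> R)
  (mu : 'I_L -> 'I_M -> R) (sigma2 : 'I_M -> R) (sigs2 : 'I_K -> R)
  (sigr2 N0 : R) (hr hi : 'I_K -> 'I_M -> 'I_N -> R)
  (hTs : forall k, 0 < Ts k) (hEp : forall k, 0 <= Ep k) (hE : forall k, 0 < E k)
  (hTc : 0 < Tc) (hX : forall k m, 0 < X k m) (hsigma : forall m, 0 < sigma2 m)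
  (hsigs : forall k, 0 <= sigs2 k) (hsigr : 0 <= sigr2) (hN0 : 0 < N0) :
  (* objective alpha *)
  is_dc (fun x : var R K M L N => va x)
  (* energy constraints *)
  /\ (forall k : 'I_K, is_dc (fun x : var R K M L N =>
        vP x k * Ts k + Ep k + Tc * (\sum_m vu x k m * X k m) - E k))
  (* alpha - sum_m v_{l,l',m} <= 0 *)
  /\ (forall l l' : 'I_L, l != l' -> is_dc (fun x : var R K M L N =>
        va x - \sum_m vv x l l' m))
  (* c^2/u - R_{k,m}(f_m) <= 0 *)
  /\ (forall (k : 'I_K) (m : 'I_M), is_dc (fun x : var R K M L N =>
        vc x k m ^+ 2 / vu x k m - Rkm hr hi k m x))
  (* Z_m - Q_{l,l',m} <= 0 *)
  /\ (forall (l l' : 'I_L) (m : 'I_M), l != l' -> is_dc (fun x : var R K M L N =>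
        Zm sigma2 sigs2 sigr2 N0 m x - Qllm mu l l' m x))
  (* c_{k,m} >= 0, i.e. -c_{k,m} <= 0 *)
  /\ (forall (k : 'I_K) (m : 'I_M), is_dc (fun x : var R K M L N => - vc x k m)).
Proof.
have Lva : lin (fun x : var R K M L N => va x) by [].
have LvP : forall k, lin (fun x : var R K M L N => vP x k) by [].
have Lvc : forall k m, lin (fun x : var R K M L N => vc x k m) by [].
have Lvu : forall k m, lin (fun x : var R K M L N => vu x k m) by [].
have Lvv : forall l l' m, lin (fun x : var R K M L N => vv x l l' m) by [].
have Lvfr : forall m i, lin (fun x : var R K M L N => vfr x m i) by [].
have Lvfi : forall m i, lin (fun x : var R K M L N => vfi x m i) by [].
split; first exact: dc_lin.
split.
  move=> k; apply: dc_lin; apply: lin_sub; last exact: lin_const.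
  apply: lin_add; last by apply: lin_scale; apply: lin_sum => m; apply: lin_scaler.
  apply: lin_add; last exact: lin_const.
  exact: lin_scaler.
split.
  move=> l l' _; apply: dc_lin; apply: lin_sub => //; exact: lin_sum.
split.
  move=> k m.
  apply: (dc_of (g1 := fun x => vc x k m ^+ 2 / vu x k m) (g2 := Rkm hr hi k m)) => //.
  - apply: conv_qol => // x [_ hu _]; exact: hu.
  - apply: conv_add; apply: conv_sq; apply: lin_sum => i.
      by apply: lin_add; apply: lin_scale.
    by apply: lin_sub; apply: lin_scale.
split.
  move=> l l' m _.
  apply: (dc_of (g1 := Zm sigma2 sigs2 sigr2 N0 m) (g2 := Qllm mu l l' m)) => //.
  - apply: conv_add; last first.
      apply: conv_scale; first exact: ltW.
      apply: conv_sum => i; apply: conv_add; apply: conv_sq => //.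
    apply: conv_add.
      apply: conv_scale; first exact: ltW.
      apply: conv_sq; exact: lin_sum.
    apply: conv_sum => k.
    apply: (conv_eq (g := fun x => sigs2 k * vc x k m ^+ 2 + sigr2 * (vc x k m ^+ 2 / vP x k))).
      by move=> x; ring.
    apply: conv_add; apply: conv_scale => //; first exact: conv_sq.
    apply: conv_qol => // x [hP _ _]; exact: hP.
  - apply: (conv_eq (g := fun x => (mu l m - mu l' m) ^+ 2 *
        ((\sum_k vc x k m) ^+ 2 / vv x l l' m))).
      by move=> x; rewrite /Qllm mulrAC -mulrA.
    apply: conv_scale; first exact: sqr_ge0.
    apply: conv_qol => //; first exact: lin_sum.
    move=> x [_ _ hv]; exact: hv.
move=> k m; apply: dc_lin => x y t /=; ring.
Qed.
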